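(* Let $\bar{A}_{\tau,\sigma}$ have the form $$\bar{A}_{\tau,\sigma}=\alpha_{(0,0)}-\tfrac12\xi_1P_1(\sigma)+\tfrac12\xi_1P_1(\tau)+\sum_{\substack{i+j\ \text{even}\\ i+j>1}}\alpha_{(i,j)}P_i(\tau)P_j(\sigma),$$ with $\xi_1=\frac{1}{2\sqrt3}$ and real $\alpha_{(i,j)}$ (finitely many nonzero, or such that the series converges uniformly on $[0,1]^2$), and let $B_\tau=1$, $C_\tau=\tau$, $\bar{B}_\tau=1-\tau$. Let $(b_i,c_i)_{i=1}^s$ be a quadrature formula on $[0,1]$ with $b_{s+1-i}=b_i$ and $c_{s+1-i}=1-c_i$ for all $i$. Then the $s$-stage RKN method with nodes $c_i$, coefficients $\bar a_{ij}=b_j\bar{A}_{c_i,c_j}$, $\bar b_i=b_i(1-c_i)$ and weights $b_i$ ($i,j=1,\dots,s$) is symmetric.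
   Context: For $q''=f(t,q)$ with smooth $f:\mathbb{R}\times\mathbb{R}^d\to\mathbb{R}^d$, an $s$-stage RKN method with coefficients $(\bar a_{ij},\bar b_i,b_i,c_i)$ and step size $h$ is $$Q_i=q_0+hc_iq'_0+h^2\sum_{j=1}^s\bar a_{ij}f(t_0+c_jh,Q_j),\quad q_1=q_0+hq'_0+h^2\sum_{i=1}^s\bar b_if(t_0+c_ih,Q_i),\quad q'_1=q'_0+h\sum_{i=1}^sb_if(t_0+c_ih,Q_i).$$ A one-step method $\Phi_h$ is symmetric if $\Phi_h=\Phi_{-h}^{-1}$. $P_k$ is the normalized shifted Legendre polynomial: $P_0=1$, $P_k(x)=\frac{\sqrt{2k+1}}{k!}\frac{d^k}{dx^k}[(x^2-x)^k]$, orthonormal in $L^2[0,1]$; e.g. $P_1(x)=\sqrt3(2x-1)$. *)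

(* Defs.v *)
From Stdlib Require Import Reals Lra Lia List Factorial.
From Stdlib Require Fin.
Import ListNotations.
Open Scope R_scope.

Fixpoint rsum (n : nat) (g : nat -> R) : R :=
  match n with
  | O => 0
  | S n' => rsum n' g + g n'
  end.

(* ---------- formal real polynomials as ascending coefficient lists ---------- *)
Fixpoint padd (p q : list R) : list R :=
  match p, q with
  | [], _ => q
  | _, [] => p
  | a :: p', b :: q' => (a + b) :: padd p' q'
  end.

Definition pscale (c : R) (p : list R) : list R := map (Rmult c) p.

Fixpoint pmul (p q : list R) : list R :=
  match p with
  | [] => []
  | a :: p' => padd (pscale a q) (0 :: pmul p' q)
  end.

Definition ppow (p : list R) (k : nat) : list R := Nat.iter k (pmul p) [1].

(* derivative of a_n x^n + a_{n+1} x^{n+1} + ... given as list starting at index n *)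
Fixpoint pderiv_aux (n : nat) (p : list R) : list R :=
  match p with
  | [] => []
  | a :: p' => (INR n * a) :: pderiv_aux (S n) p'
  end.

Definition pderiv (p : list R) : list R :=
  match p with
  | [] => []
  | _ :: p' => pderiv_aux 1 p'
  end.

Definition peval (p : list R) (x : R) : R :=
  fold_right (fun a acc => a + x * acc) 0 p.

(* Normalized shifted Legendre polynomial (Rodrigues formula):
   P_k(x) = sqrt(2k+1)/k! * d^k/dx^k [(x^2 - x)^k]. *)
Definition Leg (k : nat) (x : R) : R :=
  sqrt (2 * INR k + 1) / INR (fact k) *
  peval (Nat.iter k pderiv (ppow [0; -1; 1] k)) x.

Definition xi1 : R := / (2 * sqrt 3).

Definition Aseries_partial (alpha : nat -> nat -> R) (N : nat) (tau sigma : R) : R :=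
  rsum (S N) (fun i => rsum (S N) (fun j =>
    if (Nat.even (i + j) && Nat.ltb 1 (i + j))%bool
    then alpha i j * Leg i tau * Leg j sigma else 0)).

Definition series_unif_conv (alpha : nat -> nat -> R) (Ssum : R -> R -> R) : Prop :=
  forall eps : R, 0 < eps ->
  exists N0 : nat, forall N : nat, (N0 <= N)%nat ->
  forall tau sigma : R, 0 <= tau <= 1 -> 0 <= sigma <= 1 ->
  Rabs (Aseries_partial alpha N tau sigma - Ssum tau sigma) < eps.

Definition Abar (alpha : nat -> nat -> R) (Ssum : R -> R -> R) (tau sigma : R) : R :=
  alpha O O - / 2 * xi1 * Leg 1 sigma + / 2 * xi1 * Leg 1 tau + Ssum tau sigma.

Definition vec (d : nat) := Fin.t d -> R.

(* One step of the s-stage RKN method (stages indexed 0..s-1), as a relation: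
   from (t0, q0, q'0) with step h the method can produce (q1, q'1). *)
Definition RKN_step (s d : nat) (abar : nat -> nat -> R) (bbar b c : nat -> R)
  (f : R -> vec d -> vec d) (h t0 : R) (q0 p0 q1 p1 : vec d) : Prop :=
  exists Q : nat -> vec d,
    (forall i, (i < s)%nat -> forall k,
       Q i k = q0 k + h * c i * p0 k
               + h ^ 2 * rsum s (fun j => abar i j * f (t0 + c j * h) (Q j) k)) /\
    (forall k, q1 k = q0 k + h * p0 k
               + h ^ 2 * rsum s (fun i => bbar i * f (t0 + c i * h) (Q i) k)) /\
    (forall k, p1 k = p0 k + h * rsum s (fun i => b i * f (t0 + c i * h) (Q i) k)).

(* Symmetry Phi_h = Phi_{-h}^{-1}: a step of size h from (t0,y0) to y1 is exactly
   a step of size -h from (t0+h,y1) back to y0, for every ODE q'' = f(t,q). *)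
Definition RKN_symmetric (s : nat) (abar : nat -> nat -> R) (bbar b c : nat -> R) : Prop :=
  forall (d : nat) (f : R -> vec d -> vec d) (h t0 : R) (q0 p0 q1 p1 : vec d),
    RKN_step s d abar bbar b c f h t0 q0 p0 q1 p1 <->
    RKN_step s d abar bbar b c f (- h) (t0 + h) q1 p1 q0 p0.

(* Main.v *)
Require Import Defs.
From Stdlib Require Import Reals.
From Stdlib Require Import Lra Lia List FunctionalExtensionality.
Import ListNotations.
Open Scope R_scope.

Lemma rsum_ext_lt n g g' : (forall i, (i < n)%nat -> g i = g' i) -> rsum n g = rsum n g'.
Proof.
  induction n; intros H; simpl; auto.
  rewrite IHn by (intros; apply H; lia). rewrite H by lia. reflexivity.
Qed.

Lemma rsum_plus n u v : rsum n (fun j => u j + v j) = rsum n u + rsum n v.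
Proof. induction n; simpl; [ring| rewrite IHn; ring]. Qed.

Lemma rsum_scal n a u : rsum n (fun j => a * u j) = a * rsum n u.
Proof. induction n; simpl; [ring| rewrite IHn; ring]. Qed.

Lemma rsum_comb n a u v w : rsum n (fun j => u j - a * v j + w j) = rsum n u - a * rsum n v + rsum n w.
Proof. induction n; simpl; [ring| rewrite IHn; ring]. Qed.

Lemma rsum_sub n u v : rsum n (fun j => u j - v j) = rsum n u - rsum n v.
Proof. induction n; simpl; [ring| rewrite IHn; ring]. Qed.

Lemma rsum_shift n g : rsum (S n) g = g 0%nat + rsum n (fun j => g (S j)).
Proof.
  induction n. simpl; ring.
  replace (rsum (S (S n)) g) with (rsum (S n) g + g (S n)) by reflexivity.
  rewrite IHn. simpl. ring.
Qed.

Lemma rsum_rev n g : rsum n (fun j => g (n - 1 - j)%nat) = rsum n g.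
Proof.
  revert g; induction n as [|n IH]; intros g. reflexivity.
  replace (rsum (S n) (fun j => g (S n - 1 - j)%nat))
    with (rsum n (fun j => g (S n - 1 - j)%nat) + g (S n - 1 - n)%nat) by reflexivity.
  rewrite (rsum_ext_lt n _ (fun j => (fun m => g (S m)) (n - 1 - j)%nat))
    by (intros; f_equal; lia).
  rewrite (IH (fun m => g (S m))). replace (S n - 1 - n)%nat with 0%nat by lia.
  rewrite (rsum_shift n g). ring.
Qed.

Lemma peval_cons a p x : peval (a :: p) x = a + x * peval p x.
Proof. reflexivity. Qed.

Lemma peval_padd p q x : peval (padd p q) x = peval p x + peval q x.
Proof.
  revert q; induction p; intros q; destruct q; simpl; try ring.
  rewrite <- !(peval_cons). cbn [padd]. rewrite !peval_cons, IHp. ring.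
Qed.

Lemma peval_pscale a p x : peval (pscale a p) x = a * peval p x.
Proof.
  unfold pscale; induction p; simpl; [ring|].
  rewrite <- !peval_cons. rewrite !peval_cons, IHp. ring.
Qed.

Lemma peval_pmul p q x : peval (pmul p q) x = peval p x * peval q x.
Proof.
  induction p; [simpl; ring|].
  cbn [pmul]. rewrite peval_padd, peval_pscale, !peval_cons, IHp. ring.
Qed.

Lemma peval_ppow p k x : peval (ppow p (S k)) x = peval p x * peval (ppow p k) x.
Proof. change (ppow p (S k)) with (pmul p (ppow p k)). apply peval_pmul. Qed.

Lemma aux_S p : forall n x,
  peval (pderiv_aux (S n) p) x = peval (pderiv_aux n p) x + peval p x.
Proof.
  induction p; intros n x. simpl; ring.
  cbn [pderiv_aux]. rewrite !peval_cons, IHp, S_INR. ring.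
Qed.

Lemma pderiv_cons a p x : peval (pderiv (a :: p)) x = peval p x + x * peval (pderiv p) x.
Proof.
  destruct p as [|b p']. simpl; ring.
  cbn [pderiv pderiv_aux]. rewrite !peval_cons, (aux_S p' 1). simpl INR. ring.
Qed.

Lemma peval_deriv p x : derivable_pt_lim (peval p) x (peval (pderiv p) x).
Proof.
  revert x; induction p; intros x.
  - change (derivable_pt_lim (fun _ => 0) x 0). apply derivable_pt_lim_const.
  - rewrite pderiv_cons.
    change (peval (a :: p)) with (fun y => a + y * peval p y).
    replace (peval p x + x * peval (pderiv p) x)
      with (0 + (1 * peval p x + x * peval (pderiv p) x)) by ring.
    apply (derivable_pt_lim_plus (fun _ => a) (fun y => y * peval p y)).
    + apply derivable_pt_lim_const.
    + apply (derivable_pt_lim_mult id (peval p)).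
      * apply derivable_pt_lim_id.
      * apply IHp.
Qed.

Lemma refl_deriv r p e : (forall x, peval r x = e * peval p (1 - x)) ->
  forall x, peval (pderiv r) x = - e * peval (pderiv p) (1 - x).
Proof.
  intros H x.
  apply (uniqueness_limite (peval r) x). apply peval_deriv.
  assert (E : peval r = fun y => e * peval p (1 - y))
    by (extensionality y; apply H).
  rewrite E.
  replace (- e * peval (pderiv p) (1 - x)) with (e * (peval (pderiv p) (1 - x) * (0 - 1))) by ring.
  apply (derivable_pt_lim_scal (fun y => peval p (1 - y))).
  apply (derivable_pt_lim_comp (fun y => 1 - y) (peval p)).
  - apply (derivable_pt_lim_minus (fun _ => 1) id).
    apply derivable_pt_lim_const. apply derivable_pt_lim_id.
  - apply peval_deriv.
Qed.

Lemma iter_sym n P : (forall x, peval P (1 - x) = peval P x) ->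
  forall x, peval (Nat.iter n pderiv P) (1 - x) = (-1) ^ n * peval (Nat.iter n pderiv P) x.
Proof.
  intros HP. induction n; intros x.
  - simpl. rewrite HP. ring.
  - change (Nat.iter (S n) pderiv P) with (pderiv (Nat.iter n pderiv P)).
    set (R0 := Nat.iter n pderiv P) in *.
    assert (H1 : forall y, peval R0 y = (-1) ^ n * peval R0 (1 - y)).
    { intros y. rewrite <- IHn. f_equal. ring. }
    rewrite (refl_deriv R0 R0 _ H1 (1 - x)).
    replace (1 - (1 - x)) with x by ring. simpl. ring.
Qed.


Lemma peval_q x : peval [0; -1; 1] x = x * x - x.
Proof. simpl. ring. Qed.

Lemma ppow_sym k : forall x, peval (ppow [0; -1; 1] k) (1 - x) = peval (ppow [0; -1; 1] k) x.
Proof.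
  intros x; induction k. simpl; ring.
  rewrite !peval_ppow, IHk, !peval_q. ring.
Qed.

Lemma Leg_refl k x : Leg k (1 - x) = (-1) ^ k * Leg k x.
Proof.
  unfold Leg. rewrite (iter_sym k _ (ppow_sym k)). ring.
Qed.

Lemma Leg1 x : Leg 1 x = sqrt 3 * (2 * x - 1).
Proof.
  unfold Leg. simpl. replace (2 * 1 + 1) with 3 by ring. field.
Qed.

Lemma pow_even i j : Nat.even (i + j) = true -> (-1) ^ i = (-1) ^ j.
Proof.
  intros H. apply Nat.even_spec in H. destruct H as [m Hm].
  assert (A : (-1) ^ i * (-1) ^ j = 1).
  { rewrite <- pow_add, Hm, pow_mult. replace ((-1) ^ 2) with 1 by ring. apply pow1. }
  assert (B : (-1) ^ j * (-1) ^ j = 1).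
  { rewrite <- pow_add. replace (j + j)%nat with (2 * j)%nat by lia.
    rewrite pow_mult. replace ((-1) ^ 2) with 1 by ring. apply pow1. }
  transitivity ((-1) ^ i * ((-1) ^ j * (-1) ^ j)). rewrite B; ring.
  rewrite <- Rmult_assoc, A. ring.
Qed.

Lemma partial_sym alpha N x y :
  Aseries_partial alpha N (1 - x) y = Aseries_partial alpha N x (1 - y).
Proof.
  unfold Aseries_partial. apply rsum_ext_lt; intros i _. apply rsum_ext_lt; intros j _.
  destruct (Nat.even (i + j)) eqn:E; simpl; [|reflexivity].
  destruct (Nat.ltb 1 (i + j)); [|reflexivity].
  rewrite !Leg_refl, (pow_even i j E). ring.
Qed.

Lemma Ssum_sym alpha Ssum (Hconv : series_unif_conv alpha Ssum) x y :
  0 <= x <= 1 -> 0 <= y <= 1 -> Ssum (1 - x) y = Ssum x (1 - y).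
Proof.
  intros Hx Hy.
  assert (K : forall eps, 0 < eps -> Rabs (Ssum (1 - x) y - Ssum x (1 - y)) < 2 * eps).
  { intros eps Heps. destruct (Hconv eps Heps) as [N0 HN].
    pose proof (HN N0 (le_n _) (1 - x) y ltac:(lra) Hy) as H1.
    pose proof (HN N0 (le_n _) x (1 - y) Hx ltac:(lra)) as H2.
    rewrite partial_sym in H1.
    apply Rabs_def2 in H1. apply Rabs_def2 in H2.
    apply Rabs_def1; lra. }
  destruct (Rtotal_order (Ssum (1 - x) y) (Ssum x (1 - y))) as [L|[L|L]]; auto.
  - pose proof (K ((Ssum x (1 - y) - Ssum (1 - x) y) / 4) ltac:(lra)) as K1.
    apply Rabs_def2 in K1. lra.
  - pose proof (K ((Ssum (1 - x) y - Ssum x (1 - y)) / 4) ltac:(lra)) as K1.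
    apply Rabs_def2 in K1. lra.
Qed.

Lemma Abar_sym alpha Ssum (Hconv : series_unif_conv alpha Ssum) x y :
  0 <= x <= 1 -> 0 <= y <= 1 ->
  Abar alpha Ssum (1 - x) y = 1 - y - x + Abar alpha Ssum x (1 - y).
Proof.
  intros Hx Hy. unfold Abar. rewrite (Ssum_sym alpha Ssum Hconv x y Hx Hy).
  rewrite !Leg1. unfold xi1.
  assert (sqrt 3 > 0) by (apply sqrt_lt_R0; lra).
  field. lra.
Qed.

Lemma step_rev s d abar bbar b c
  (Hb : forall i, (i < s)%nat -> b (s - 1 - i)%nat = b i)
  (Hcs : forall i, (i < s)%nat -> c (s - 1 - i)%nat = 1 - c i)
  (Hbb : forall i, (i < s)%nat -> bbar (s - 1 - i)%nat = b i - bbar i)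
  (Ha : forall i j, (i < s)%nat -> (j < s)%nat ->
     abar (s - 1 - i)%nat j = bbar j - c i * b j + abar i (s - 1 - j)%nat)
  f h t0 q0 p0 q1 p1 :
  RKN_step s d abar bbar b c f h t0 q0 p0 q1 p1 ->
  RKN_step s d abar bbar b c f (- h) (t0 + h) q1 p1 q0 p0.
Proof.
  intros [Q [HQ [Hq Hp]]].
  exists (fun i => Q (s - 1 - i)%nat).
  set (F := fun j k => f (t0 + c j * h) (Q j) k).
  assert (Rev : forall (u : nat -> R) k,
    rsum s (fun j => u j * f (t0 + h + c j * - h) (Q (s - 1 - j)%nat) k)
    = rsum s (fun j => u (s - 1 - j)%nat * F j k)).
  { intros u k.
    rewrite <- (rsum_rev s (fun j => u (s - 1 - j)%nat * F j k)).
    apply rsum_ext_lt; intros j Hj. unfold F.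
    replace (s - 1 - (s - 1 - j))%nat with j by lia.
    rewrite (Hcs j Hj). replace (t0 + h + c j * - h) with (t0 + (1 - c j) * h) by ring. reflexivity. }
  split; [|split].
  - intros i Hi k. rewrite Rev.
    rewrite (HQ (s - 1 - i)%nat ltac:(lia) k), Hq, Hp, (Hcs i Hi).
    assert (E : rsum s (fun j => abar (s - 1 - i)%nat j * f (t0 + c j * h) (Q j) k)
      = rsum s (fun j => bbar j * f (t0 + c j * h) (Q j) k)
        - c i * rsum s (fun j => b j * f (t0 + c j * h) (Q j) k)
        + rsum s (fun j => abar i (s - 1 - j)%nat * F j k)).
    { rewrite <- rsum_comb. apply rsum_ext_lt; intros j Hj.
      rewrite (Ha i j Hi Hj). unfold F. ring. }
    rewrite E. ring.
  - intros k. rewrite Rev, Hq, Hp.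
    assert (E : rsum s (fun j => bbar (s - 1 - j)%nat * F j k)
      = rsum s (fun j => b j * f (t0 + c j * h) (Q j) k)
        - rsum s (fun j => bbar j * f (t0 + c j * h) (Q j) k)).
    { rewrite <- rsum_sub.
      apply rsum_ext_lt; intros j Hj. rewrite (Hbb j Hj). unfold F. ring. }
    rewrite E. ring.
  - intros k. rewrite Rev, Hp.
    assert (E : rsum s (fun j => b (s - 1 - j)%nat * F j k)
      = rsum s (fun j => b j * f (t0 + c j * h) (Q j) k)).
    { apply rsum_ext_lt; intros j Hj. rewrite (Hb j Hj). reflexivity. }
    rewrite E. ring.
Qed.

Theorem corollary4p2 (s : nat) (b c : nat -> R) (alpha : nat -> nat -> R)
  (Ssum : R -> R -> R)
  (Hconv : series_unif_conv alpha Ssum)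
  (Hc : forall i, (i < s)%nat -> 0 <= c i <= 1)
  (Hb : forall i, (i < s)%nat -> b (s - 1 - i)%nat = b i)
  (Hcs : forall i, (i < s)%nat -> c (s - 1 - i)%nat = 1 - c i) :
  RKN_symmetric s (fun i j => b j * Abar alpha Ssum (c i) (c j))
                  (fun i => b i * (1 - c i)) b c.
Proof.
  assert (Hbb : forall i, (i < s)%nat ->
    (fun i => b i * (1 - c i)) (s - 1 - i)%nat = b i - (fun i => b i * (1 - c i)) i).
  { intros i Hi. simpl. rewrite (Hb i Hi), (Hcs i Hi). ring. }
  assert (Ha : forall i j, (i < s)%nat -> (j < s)%nat ->
     (fun i j => b j * Abar alpha Ssum (c i) (c j)) (s - 1 - i)%nat j
     = (fun i => b i * (1 - c i)) j - c i * b j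
       + (fun i j => b j * Abar alpha Ssum (c i) (c j)) i (s - 1 - j)%nat).
  { intros i j Hi Hj. simpl. rewrite (Hcs i Hi), (Hcs j Hj), (Hb j Hj).
    rewrite (Abar_sym alpha Ssum Hconv (c i) (c j) (Hc i Hi) (Hc j Hj)). ring. }
  intros d f h t0 q0 p0 q1 p1. split.
  - apply step_rev; assumption.
  - intros H. pose proof (step_rev _ _ _ _ _ _ Hb Hcs Hbb Ha _ _ _ _ _ _ _ H) as H'.
    rewrite Ropp_involutive in H'. replace (t0 + h + - h) with t0 in H' by ring.
    exact H'.
Qed.
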